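(* Let $K_0,\dots,K_n$ be concave kernel functions such that for every $\mathbf{x}\in\mathbb{T}^n$ and $z\in\mathbb{T}$ with $F(\mathbf{x},z)=\overline{m}(\mathbf{x})$ one has $z\ne x_j$ for all $j=0,\dots,n$. For each $j$ let $(K_j^{(k)})_{k\in\mathbb{N}}$ be a sequence of concave kernel functions converging to $K_j$ locally uniformly on $(0,2\pi)$ (i.e. uniformly on every compact subset of $(0,2\pi)$). Then $\overline{m}^{(k)}(\mathbf{x})\to\overline{m}(\mathbf{x})$ uniformly on $\mathbb{T}^n$ as $k\to\infty$.
   Context: Identify the torus $\mathbb{T}=\mathbb{R}/2\pi\mathbb{Z}$ with $[0,2\pi)$. A concave kernel function is a $2\pi$-periodic function $K:\mathbb{R}\to[-\infty,\infty)$ which is real-valued and concave on $(0,2\pi)$ with $\lim_{t\downarrow0}K(t)=\lim_{t\uparrow2\pi}K(t)$ existing in $[-\infty,\infty)$ (this common value being $K(0)$). For $\mathbf{x}=(x_1,\dots,x_n)\in\mathbb{T}^n$ put $x_0=0$, $F(\mathbf{x},t)=K_0(t)+\sum_{j=1}^nK_j(t-x_j)$ and $\overline{m}(\mathbf{x})=\sup_{t\in\mathbb{T}}F(\mathbf{x},t)$; $F^{(k)}$ and $\overline{m}^{(k)}$ are defined in the same way from the kernels $K_0^{(k)},\dots,K_n^{(k)}$. *)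

(* Defs.v *)
From HB Require Import structures.
From mathcomp Require Import all_boot all_order all_algebra.
From mathcomp Require Import all_classical all_reals all_analysis.
Set Implicit Arguments. Unset Strict Implicit. Unset Printing Implicit Defensive.
Import Order.TTheory GRing.Theory Num.Theory.
Import numFieldNormedType.Exports.
Local Open Scope classical_set_scope.
Local Open Scope ring_scope.

(* The torus T = R / 2piZ is identified with [0, 2pi).
   A kernel is a function R -> [-oo, +oo) (values in \bar R, never +oo). *)

Definition concave_kernel (R : realType) (K : R -> \bar R) : Prop :=
  (forall t : R, K (t + 2 * pi) = K t) /\
  (forall t : R, 0 < t < 2 * pi -> K t \is a fin_num) /\
  (forall s t l : R, 0 < s < 2 * pi -> 0 < t < 2 * pi -> 0 <= l <= 1 ->
     l * fine (K s) + (1 - l) * fine (K t) <= fine (K (l * s + (1 - l) * t))) /\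
  K 0 != +oo%E /\
  (K t @[t --> (0:R)^'+] --> K 0) /\
  (K t @[t --> (2 * pi : R)^'-] --> K 0).

(* F(x, t) = K_0(t) + sum_{j=1}^n K_j(t - x_j); the kernels K_0..K_n are
   indexed by 'I_n.+1 (K ord0 = K_0, K (lift ord0 j) = K_{j+1}),
   the points x_1..x_n by 'I_n. *)
Definition Fsum (R : realType) (n : nat) (K : 'I_n.+1 -> R -> \bar R)
    (x : 'I_n -> R) (t : R) : \bar R :=
  (K ord0 t + \sum_(j < n) K (lift ord0 j) (t - x j)%R)%E.

Definition mbar (R : realType) (n : nat) (K : 'I_n.+1 -> R -> \bar R)
    (x : 'I_n -> R) : \bar R :=
  ereal_sup [set Fsum K x t | t in `[0, 2 * pi[%classic].

Definition in_torus_n (R : realType) (n : nat) (x : 'I_n -> R) : Prop :=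
  forall j, 0 <= x j < 2 * pi.

(* Main.v *)
Require Import Defs.
From HB Require Import structures.
From mathcomp Require Import all_boot all_order all_algebra.
From mathcomp Require Import all_classical all_reals all_analysis.
From mathcomp Require Import ring lra zify.
Import Order.TTheory GRing.Theory Num.Theory.
Import numFieldNormedType.Exports.
Local Open Scope classical_set_scope.
Local Open Scope ring_scope.

Section Kern.
Variable R : realType.
Local Notation M := (2 * (pi : R)).
Variable K : R -> \bar R.
Hypothesis hK : concave_kernel K.

Lemma M_gt0 : 0 < M.
Proof. by rewrite mulr_gt0 // pi_gt0. Qed.

Lemma kper t : K (t + M) = K t.
Proof. by case: hK. Qed.

Lemma kperN t : K (t - M) = K t.
Proof. by rewrite -kper subrK. Qed.

Lemma kfin t : 0 < t < M -> K t = (fine (K t))%:E.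
Proof. by case: hK => _ [h _] /h/fineK. Qed.
Arguments kfin [t].

Lemma kconc s t l : 0 < s < M -> 0 < t < M -> 0 <= l <= 1 ->
     l * fine (K s) + (1 - l) * fine (K t) <= fine (K (l * s + (1 - l) * t)).
Proof. by case: hK => _ [_ [h _]]; apply: h. Qed.

Lemma near_open (A : set (\bar R)) : open A -> A (K 0) ->
  exists2 d, 0 < d & forall s, (0 < s < d \/ M - d < s < M) -> A (K s).
Proof.
move=> oA AK.
case: hK => _ [_ [_ [_ [h0 hM]]]].
have nA : nbhs (K 0) A by apply: open_nbhs_nbhs; split.
have := h0 _ nA; have := hM _ nA.
move=> [e1 /= e10 H1] [e2 /= e20 H2].
exists (Num.min e1 e2); first by rewrite lt_min e10 e20.
move=> s [/andP[s0 sd]|/andP[sd sM]].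
- apply: H2 => //.
  rewrite /ball_ /= sub0r normrN gtr0_norm //.
  by apply: lt_le_trans sd _; rewrite ge_min lexx orbT.
- apply: H1 => //.
  rewrite /ball_ /= gtr0_norm ?subr_gt0 //.
  rewrite ltrBlDl -ltrBlDr; apply: le_lt_trans sd.
  by rewrite lerB // ge_min lexx.
Qed.
Arguments near_open [A].

Lemma kperz (z : int) t : K (t + z%:~R * M) = K t.
Proof.
elim/int_rec: z t => [|m IH|m IH] t; first by rewrite mul0r addr0.
- by rewrite intS rmorphD /= mulrDl mul1r addrA IH kper.
- by rewrite intS opprD rmorphD /= mulrDl mulN1r addrA IH kperN.
Qed.

Definition red (u : R) := u - (Num.floor (u / M))%:~R * M.

Lemma red_itv u : 0 <= red u < M.
Proof.
have M0 := M_gt0.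
rewrite /red subr_ge0 ltrBlDl; apply/andP; split.
- by rewrite -ler_pdivlMr // floor_le.
- have H : u / M < (Num.floor (u / M) + 1)%:~R by rewrite -floor_lt_int ltzD1.
  rewrite intrD ltr_pdivrMr // mulrDl mul1r in H.
  lra.
Qed.

Lemma kred u : K u = K (red u).
Proof. by rewrite /red -mulNr -rmorphN /= kperz. Qed.

Lemma red_eq u : exists z : int, u = red u + z%:~R * M.
Proof. by exists (Num.floor (u / M)); rewrite /red subrK. Qed.

Lemma kconc2 u s v : 0 < u < M -> 0 < v < M -> u < s < v ->
  (v - s) * fine (K u) + (s - u) * fine (K v) <= (v - u) * fine (K s).
Proof.
move=> hu hv /andP[us sv].
have vu : 0 < v - u by rewrite subr_gt0 (lt_trans us sv).
set l := (v - s) / (v - u).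
have l01 : 0 <= l <= 1.
  apply/andP; split; first by apply: divr_ge0; lra.
  rewrite ler_pdivrMr //; lra.
have := kconc u v l hu hv l01.
have -> : l * u + (1 - l) * v = s.
  rewrite /l; field; by rewrite gt_eqF.
move=> H.
have -> : (v - s) = l * (v - u) by rewrite /l mulrVK // unitfE gt_eqF.
have -> : (s - u) = (1 - l) * (v - u) by rewrite /l; field; rewrite gt_eqF.
move: H; rewrite -(ler_pM2l vu) => H; lra.
Qed.

Lemma kmin s : 0 < s < M -> (K 0 <= K s)%E.
Proof.
move=> hs; have M0 := M_gt0.
rewrite (kfin hs); set c := fine (K s).
rewrite leNgt; apply/negP => Hlt.
have [d d0 Hd] := near_open (@open_ereal_gt_ereal _ c%:E) Hlt.
set m1 := Num.min s d.
have h1 : m1 <= s by rewrite ge_min lexx.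
have h2 : m1 <= d by rewrite ge_min lexx orbT.
have h3 : 0 < m1 by rewrite lt_min d0 andbT; case/andP: hs.
set m2 := Num.min (M - s) d.
have g1 : m2 <= M - s by rewrite ge_min lexx.
have g2 : m2 <= d by rewrite ge_min lexx orbT.
have g3 : 0 < m2 by rewrite lt_min d0 andbT subr_gt0; case/andP: hs.
set u := m1 / 2; set v := M - m2 / 2.
have hu : 0 < u < M by apply/andP; split; rewrite /u; case/andP: hs; lra.
have hv : 0 < v < M by apply/andP; split; rewrite /v; case/andP: hs; lra.
have Ku : c < fine (K u).
  have := Hd u (or_introl _ _); rewrite /= (kfin hu) lte_fin; apply.
  by apply/andP; split; rewrite /u; lra.
have Kv : c < fine (K v).
  have := Hd v (or_intror _ _); rewrite /= (kfin hv) lte_fin; apply.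
  by apply/andP; split; rewrite /v; case/andP: hs; lra.
have := @kconc2 u s v hu hv.
have usv : u < s < v by apply/andP; split; rewrite /u /v; case/andP: hs; lra.
move=> /(_ usv) H.
have p1 : 0 < (v - s) * (fine (K u) - c).
  by apply: mulr_gt0; rewrite subr_gt0 //; case/andP: usv.
have p2 : 0 < (s - u) * (fine (K v) - c).
  by apply: mulr_gt0; rewrite subr_gt0 //; case/andP: usv.
rewrite -/c in H; lra.
Qed.
Arguments kmin [s].

Lemma kchord s a b c : 0 < s -> s < a -> a < b -> b < M -> 0 <= c ->
  a - s <= c * (b - a) ->
  fine (K s) <= fine (K a) + c * Num.max 0 (fine (K a) - fine (K b)).
Proof.
move=> s0 sa ab bM c0 hc.
have H := @kconc2 s a b.
have /H {}H : 0 < s < M by apply/andP; split; lra.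
have /H {}H : 0 < b < M by apply/andP; split; lra.
have /H {}H : s < a < b by apply/andP; split.
set m := Num.max 0 (fine (K a) - fine (K b)).
have m0 : 0 <= m by rewrite le_max lexx.
have mD : fine (K a) - fine (K b) <= m by rewrite le_max lexx orbT.
have q1 : 0 <= (a - s) * (m - (fine (K a) - fine (K b))).
  by apply: mulr_ge0; lra.
have q2 : 0 <= (c * (b - a) - (a - s)) * m by apply: mulr_ge0; lra.
have q3 : 0 <= (b - a) * (fine (K a) + c * m - fine (K s)) by lra.
rewrite pmulr_rge0 in q3; first lra.
lra.
Qed.

Lemma kchordM s a b c : 0 < b -> b < a -> a < s -> s < M -> 0 <= c ->
  s - a <= c * (a - b) ->
  fine (K s) <= fine (K a) + c * Num.max 0 (fine (K a) - fine (K b)).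
Proof.
move=> b0 ba sa sM c0 hc.
have H := @kconc2 b a s.
have /H {}H : 0 < b < M by apply/andP; split; lra.
have /H {}H : 0 < s < M by apply/andP; split; lra.
have /H {}H : b < a < s by apply/andP; split.
set m := Num.max 0 (fine (K a) - fine (K b)).
have m0 : 0 <= m by rewrite le_max lexx.
have mD : fine (K a) - fine (K b) <= m by rewrite le_max lexx orbT.
have q1 : 0 <= (s - a) * (m - (fine (K a) - fine (K b))).
  by apply: mulr_ge0; lra.
have q2 : 0 <= (c * (a - b) - (s - a)) * m by apply: mulr_ge0; lra.
have q3 : 0 <= (a - b) * (fine (K a) + c * m - fine (K s)) by lra.
rewrite pmulr_rge0 in q3; first lra.
lra.
Qed.

Lemma kminab p s q : 0 < p -> p <= s -> s <= q -> q < M ->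
  Num.min (fine (K p)) (fine (K q)) <= fine (K s).
Proof.
move=> p0 ps sq qM.
case/boolP: (p == s) => [/eqP<-|nps]; first by rewrite ge_min lexx.
case/boolP: (s == q) => [/eqP->|nsq]; first by rewrite ge_min lexx orbT.
have ps' : p < s by rewrite lt_neqAle nps ps.
have sq' : s < q by rewrite lt_neqAle nsq sq.
have H := @kconc2 p s q.
have /H {}H : 0 < p < M by apply/andP; split; lra.
have /H {}H : 0 < q < M by apply/andP; split; lra.
have /H {}H : p < s < q by apply/andP; split.
set m := Num.min (fine (K p)) (fine (K q)).
have m1 : m <= fine (K p) by rewrite ge_min lexx.
have m2 : m <= fine (K q) by rewrite ge_min lexx orbT.
have q1 : 0 <= (q - s) * (fine (K p) - m) by apply: mulr_ge0; lra.
have q2 : 0 <= (s - p) * (fine (K q) - m) by apply: mulr_ge0; lra.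
have q3 : 0 <= (q - p) * (fine (K s) - m) by lra.
rewrite pmulr_rge0 in q3; first lra.
lra.
Qed.

Lemma kshift s s' q D eta : 0 < s -> s <= s' -> s' < q -> q < M ->
  fine (K s) - fine (K q) <= D -> 0 <= D -> (s' - s) * D <= eta * (q - s) ->
  fine (K s) - eta <= fine (K s').
Proof.
move=> s0 ss' s'q qM hD D0 he.
case/boolP: (s == s') => [/eqP ess|nss].
  rewrite -ess; rewrite -ess subrr mul0r pmulr_lge0 in he; first lra.
  lra.
have ss'' : s < s' by rewrite lt_neqAle nss ss'.
have H := @kconc2 s s' q.
have /H {}H : 0 < s < M by apply/andP; split; lra.
have /H {}H : 0 < q < M by apply/andP; split; lra.
have /H {}H : s < s' < q by apply/andP; split.
have q1 : 0 <= (s' - s) * (D - (fine (K s) - fine (K q))) by apply: mulr_ge0; lra.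
have q3 : 0 <= (q - s) * (fine (K s') - fine (K s) + eta) by lra.
rewrite pmulr_rge0 in q3; first lra.
lra.
Qed.

Definition Ub := fine (K (M / 2)) + 2 * `|fine (K (M / 2)) - fine (K (M * 3 / 4))|
  + 2 * `|fine (K (M / 2)) - fine (K (M / 4))|.

Lemma max0_norm (x : R) : Num.max 0 x <= `|x|.
Proof. by rewrite ge_max normr_ge0 ler_norm. Qed.

Lemma kub s : (K s <= Ub%:E)%E.
Proof.
have M0 := M_gt0.
have n1 := normr_ge0 (fine (K (M / 2)) - fine (K (M * 3 / 4))).
have n2 := normr_ge0 (fine (K (M / 2)) - fine (K (M / 4))).
have x1 := max0_norm (fine (K (M / 2)) - fine (K (M * 3 / 4))).
have x2 := max0_norm (fine (K (M / 2)) - fine (K (M / 4))).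
have hh : 0 < M / 2 < M by apply/andP; split; lra.
rewrite kred; have /andP[r0 rM] := red_itv s; set r := red s; rewrite -/r in r0 rM.
have key : 0 < r -> fine (K r) <= Ub.
  move=> r0'; rewrite /Ub.
  have [rl|rg] := ltP r (M / 2).
    have := @kchord r (M / 2) (M * 3 / 4) 2 r0' rl.
    have /[swap]/[apply] : M / 2 < M * 3 / 4 by lra.
    have /[swap]/[apply] : M * 3 / 4 < M by lra.
    move=> /(_ (ler0n R 2)) H.
    have /H : M / 2 - r <= 2 * (M * 3 / 4 - M / 2) by lra.
    move=> ?; lra.
  case/boolP: (r == M / 2) => [/eqP->|rne]; first lra.
  have rg' : M / 2 < r by rewrite lt_neqAle eq_sym rne rg.
  have := @kchordM r (M / 2) (M / 4) 2.
  have /[swap]/[apply] : 0 < M / 4 by lra.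
  have /[swap]/[apply] : M / 4 < M / 2 by lra.
  move=> /(_ rg' rM (ler0n R 2)) H.
  have /H : r - M / 2 <= 2 * (M / 2 - M / 4) by lra.
  move=> ?; lra.
case/boolP: (r == 0) => [/eqP->|rn0].
  apply: (le_trans (kmin hh)); rewrite (kfin hh) lee_fin /Ub; lra.
have r0' : 0 < r by rewrite lt_neqAle eq_sym rn0 r0.
have hr : 0 < r < M by rewrite r0'.
by rewrite (kfin hr) lee_fin key.
Qed.

Lemma kmin_all s : (K 0 <= K s)%E.
Proof.
rewrite [K s]kred; have /andP[r0 rM] := red_itv s.
case/boolP: (red s == 0) => [/eqP->//|rn0].
by apply: kmin; rewrite lt_neqAle eq_sym rn0 r0 rM.
Qed.

Lemma knear c : (K 0 < c%:E)%E ->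
  exists2 d, 0 < d & forall s, (0 < s < d \/ M - d < s < M) -> fine (K s) < c.
Proof.
move=> Hc; have M0 := M_gt0.
have [d d0 Hd] := near_open (@open_ereal_lt_ereal _ c%:E) Hc.
have m1 : Num.min d (M / 2) <= d by rewrite ge_min lexx.
have m2 : Num.min d (M / 2) <= M / 2 by rewrite ge_min lexx orbT.
exists (Num.min d (M / 2)); first by rewrite lt_min d0 /=; lra.
move=> s hs.
have hs' : 0 < s < M by case: hs => /andP[h1 h2]; apply/andP; split; lra.
have : 0 < s < d \/ M - d < s < M.
  by case: hs => /andP[h1 h2]; [left|right]; apply/andP; split; lra.
by move/Hd; rewrite /= (kfin hs') lte_fin.
Qed.
End Kern.
Arguments M_gt0 {R}.
Arguments kper [R K] hK t.
Arguments kperN [R K] hK t.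
Arguments kfin [R K] hK [t].
Arguments kconc [R K] hK s t l.
Arguments near_open [R K] hK [A].
Arguments kperz [R K] hK z t.
Arguments red {R} u.
Arguments red_itv {R} u.
Arguments kred [R K] hK u.
Arguments red_eq {R} u.
Arguments kconc2 [R K] hK u s v.
Arguments kmin [R K] hK [s].
Arguments kchord [R K] hK s a b c.
Arguments kchordM [R K] hK s a b c.
Arguments kminab [R K] hK p s q.
Arguments kshift [R K] hK s s' q D eta.
Arguments Ub {R} K.
Arguments max0_norm {R} x.
Arguments kub [R K] hK s.
Arguments kmin_all [R K] hK s.
Arguments knear [R K] hK c.

Section Seq.
Variable R : realType.
Local Notation M := (2 * (pi : R)).
Variables (K : R -> \bar R) (Ks : nat -> R -> \bar R).
Hypotheses (hK : concave_kernel K) (hKs : forall k, concave_kernel (Ks k)).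
Hypothesis hconv : forall a b : R, 0 < a -> b < M -> forall eps : R, 0 < eps ->
  exists N : nat, forall k, (N <= k)%N -> forall t, a <= t <= b ->
    `| fine (Ks k t) - fine (K t) | < eps.

Lemma unear c eta : (K 0 < c%:E)%E -> 0 < eta ->
  exists2 a, 0 < a & exists N : nat, forall k, (N <= k)%N -> forall s, 0 <= s < M ->
    (s < a \/ M - a < s) -> (Ks k s <= (c + 2 * eta)%:E)%E.
Proof.
move=> Hc eta0; have M0 := @M_gt0 R.
have [d d0 Hd] := knear hK c Hc.
set D := `|c - fine (K (M / 2))| + 2 * eta.
have D0 : 0 <= D by rewrite /D; have := normr_ge0 (c - fine (K (M / 2))); lra.
set e := eta / (D + 1).
have e0 : 0 < e by rewrite /e divr_gt0 //; lra.
have eD : e * (D + 1) = eta by rewrite /e mulrVK // unitfE; apply/eqP; lra.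
set a := Num.min (d / 2) (Num.min (M / 4) (M / 4 * e)).
have a1 : a <= d / 2 by rewrite ge_min lexx.
have a2 : a <= M / 4 by rewrite ge_min ge_min lexx orbT.
have a3 : a <= M / 4 * e by rewrite ge_min ge_min lexx !orbT.
have a0 : 0 < a by rewrite !lt_min !divr_gt0 //= mulr_gt0 // divr_gt0.
have aM : M - a < M by lra.
have [N HN] := hconv a (M - a) a0 aM eta eta0.
have aMa : a <= M - a by lra.
have hM2 : 0 < M / 2 < M by apply/andP; split; lra.
have Fa : fine (K a) < c by apply: Hd; left; apply/andP; split; lra.
have FMa : fine (K (M - a)) < c by apply: Hd; right; apply/andP; split; lra.
exists a => //; exists N => k kN.
have Ca := HN k kN a; have /Ca {Ca} : a <= a <= M - a by rewrite lexx aMa.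
have CMa := HN k kN (M - a); have /CMa {CMa} : a <= M - a <= M - a by rewrite lexx aMa.
have CM2 := HN k kN (M / 2); have /CM2 {CM2} : a <= M / 2 <= M - a by apply/andP; split; lra.
rewrite !ltr_norml => /andP[c1 c2] /andP[c3 c4] /andP[c5 c6].
have normc := normr_ge0 (c - fine (K (M / 2))).
have normc' := ler_norm (c - fine (K (M / 2))).
have hM2' : M / 2 - a >= M / 4 by lra.
have ep1 : e * (M / 4) <= e * (M / 2 - a) by rewrite ler_wpM2l // ltW.
have main : forall s, 0 < s < a \/ M - a < s < M -> fine (Ks k s) <= c + 2 * eta.
  move=> s [/andP[s0 sa]|/andP[sa sM]].
  - have := kchord (hKs k) s a (M / 2) e s0 sa.
    have /[swap]/[apply] : a < M / 2 by lra.
    have /[swap]/[apply] : M / 2 < M by lra.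
    move=> /(_ (ltW e0)).
    have /[swap]/[apply] : a - s <= e * (M / 2 - a) by lra.
    set mx := Num.max _ _ => H.
    have mx1 : mx <= D by rewrite ge_max D0 /= /D; lra.
    have : e * mx <= e * (D + 1) by rewrite ler_wpM2l // ?(ltW e0) //; lra.
    lra.
  - have := kchordM (hKs k) s (M - a) (M / 2) e.
    have /[swap]/[apply] : 0 < M / 2 by lra.
    have /[swap]/[apply] : M / 2 < M - a by lra.
    move=> /(_ sa sM (ltW e0)).
    have /[swap]/[apply] : s - (M - a) <= e * (M - a - M / 2) by lra.
    set mx := Num.max _ _ => H.
    have mx1 : mx <= D by rewrite ge_max D0 /= /D; lra.
    have : e * mx <= e * (D + 1) by rewrite ler_wpM2l // ?(ltW e0) //; lra.
    lra.
move=> s /andP[s0 sM] hs.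
case/boolP: (s == 0) => [/eqP->|sn0].
  apply: (le_trans (kmin_all (hKs k) (a / 2))).
  have ha : 0 < a / 2 < M by apply/andP; split; lra.
  rewrite (kfin (hKs k) ha) lee_fin; apply: main; left; apply/andP; split; lra.
have s0' : 0 < s by rewrite lt_neqAle eq_sym sn0 s0.
have hs' : 0 < s < M by rewrite s0' sM.
rewrite (kfin (hKs k) hs') lee_fin; apply: main.
by case: hs => h; [left|right]; apply/andP; split.
Qed.
End Seq.
Arguments unear [R K Ks] hK hKs hconv c eta.

Section Pig.
Variable R : realType.
Local Notation M := (2 * (pi : R)).

Definition badb (d v : R) : bool := (red v < d) || (M - d < red v).

Lemma bad_pair (v w d : R) : 0 < d -> 2 * d <= w - v -> w - v <= M - 2 * d ->
  badb d v -> badb d w -> False.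
Proof.
move=> d0 h1 h2 bv bw; have M0 := @M_gt0 R.
have /andP[rv0 rvM] := red_itv v; have /andP[rw0 rwM] := red_itv w.
set z := (Num.floor (w / M) - Num.floor (v / M)).
have e : red w - red v = w - v - z%:~R * M by rewrite /red /z intrB; ring.
have : (z <= -1)%R \/ z = 0 \/ z = 1 \/ (2 <= z)%R by lia.
case=> [hz|[hz|[hz|hz]]].
- have hz' : (z%:~R : R) <= -1 by rewrite -(ler_int R) in hz.
  have : z%:~R * M <= - M by nra.
  move: bv bw; rewrite /badb => /orP[] ? /orP[] ?; lra.
- rewrite hz mul0r subr0 in e.
  move: bv bw; rewrite /badb => /orP[] ? /orP[] ?; lra.
- rewrite hz mul1r in e.
  move: bv bw; rewrite /badb => /orP[] ? /orP[] ?; lra.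
- have hz' : 2 <= (z%:~R : R) by rewrite -(ler_int R) in hz.
  have : 2 * M <= z%:~R * M by nra.
  move: bv bw; rewrite /badb => /orP[] ? /orP[] ?; lra.
Qed.

Lemma pigeon (m : nat) (Y : 'I_m -> R) (t0 d : R) : 0 < d ->
  2 * (m.+1)%:R * d <= M ->
  exists i : 'I_m.+1, forall j, d <= red (t0 + 2 * i%:R * d - Y j) <= M - d.
Proof.
move=> d0 hm.
set v := fun (i : 'I_m.+1) j => t0 + 2 * i%:R * d - Y j.
case/boolP: [exists i : 'I_m.+1, [forall j : 'I_m, ~~ badb d (v i j)]].
  case/existsP => i /forallP H; exists i => j; have := H j.
  by rewrite /badb negb_or -!leNgt.
rewrite negb_exists => /forallP Hn.
have Hb : forall i, exists j, badb d (v i j).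
  move=> i; have := Hn i; rewrite negb_forall => /existsP[j].
  by rewrite negbK => ?; exists j.
have [f hf] := choice Hb.
have finj : injective f.
  move=> i i' e.
  wlog : i i' e / (i <= i')%N.
    move=> W; case/orP: (leq_total i i') => h; first exact: W.
    exact/esym/W.
  rewrite leq_eqVlt => /orP[/eqP/val_inj //|lt].
  exfalso.
  have h1 := hf i; have h2 := hf i'; rewrite -e in h2.
  have ii' : (i%:R + 1 <= (i'%:R : R)) by rewrite natr1 ler_nat.
  have i'm : ((i'%:R : R) <= m%:R) by rewrite ler_nat -ltnS ltn_ord.
  have i0 : (0 <= (i%:R : R)) by rewrite ler0n.
  rewrite -natr1 in hm.
  apply: (bad_pair _ _ _ d0 _ _ h1 h2); rewrite /v; nra.
have := leq_card f finj; by rewrite !card_ord ltnn.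
Qed.
End Pig.
Arguments badb {R} d v.
Arguments pigeon {R} [m] Y t0 d.

Section Gen.
Variables (R : realType) (n : nat).
Local Notation M := (2 * (pi : R)).

Definition X (x : 'I_n -> R) (j : 'I_n.+1) : R :=
  if unlift ord0 j is Some i then x i else 0.

Lemma X_itv x : in_torus_n x -> forall j, 0 <= X x j < M.
Proof.
move=> hx j; rewrite /X; case: (unlift ord0 j) => [i|]; first exact: hx.
by rewrite lexx /= M_gt0.
Qed.

Lemma FsumE (L : 'I_n.+1 -> R -> \bar R) x t :
  Fsum L x t = (\sum_(j < n.+1) L j (t - X x j)%R)%E.
Proof.
rewrite /Fsum big_ord_recl /X unlift_none subr0; congr (_ + _)%E.
by apply: eq_bigr => i _; rewrite liftK.
Qed.

Variable L : 'I_n.+1 -> R -> \bar R.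
Hypothesis hL : forall j, concave_kernel (L j).

Lemma Fsum_red x t : Fsum L x t = Fsum L x (red t).
Proof.
rewrite !FsumE; apply: eq_bigr => j _.
have [z hz] := red_eq t; rewrite {1}hz addrAC.
by rewrite kperz.
Qed.

Lemma mbar_ge x t : (Fsum L x t <= mbar L x)%E.
Proof.
rewrite Fsum_red; apply: ereal_sup_ubound; exists (red t) => //.
by rewrite /= in_itv /= red_itv.
Qed.

Lemma mbar_le x : (mbar L x <= (\sum_j Ub (L j))%:E)%E.
Proof.
apply: ge_ereal_sup => _ [t _ <-]; rewrite FsumE -sumEFin.
by apply: lee_sum => j _; exact: kub.
Qed.

Definition del0 : R := M / (2 * (n.+2)%:R).
Definition mlow : R :=
  \sum_j Num.min (fine (L j del0)) (fine (L j (M - del0))).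

Lemma mbar_lb x : in_torus_n x -> (mlow%:E <= mbar L x)%E.
Proof.
move=> hx; have M0 := @M_gt0 R.
have n0 : 0 < (n.+2)%:R :> R by rewrite ltr0n.
have d0 : 0 < del0 by rewrite /del0 divr_gt0 // mulr_gt0.
have dM : 2 * (n.+2)%:R * del0 = M by rewrite /del0; field; lra.
have dM' : del0 < M - del0.
  have : 2 * 2 * del0 <= 2 * (n.+2)%:R * del0.
    rewrite ler_pM2r // ler_pM2l // ler_nat //.
  lra.
have dM2 : 2 * (n.+2)%:R * del0 <= M by rewrite dM.
have [i hi] := pigeon (X x) 0 del0 d0 dM2.
apply: le_trans (mbar_ge x (0 + 2 * i%:R * del0)).
rewrite FsumE /mlow -sumEFin; apply: lee_sum => j _.
rewrite [X in (_ <= X)%E](kred (hL j)); have /andP[h1 h2] := hi j.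
set r := red _ in h1 h2 *.
have hr : 0 < r < M by apply/andP; split; lra.
rewrite (kfin (hL j) hr) lee_fin; apply: kminab => //; lra.
Qed.
End Gen.
Arguments X {R n} x j.
Arguments FsumE {R n} L x t.
Arguments Fsum_red [R n L] hL x t.
Arguments mbar_ge [R n L] hL x t.
Arguments mbar_le [R n L] hL x.
Arguments del0 {R} n.
Arguments mlow {R n} L.
Arguments mbar_lb [R n L] hL x.

Lemma finN (I : finType) (P : I -> nat -> Prop) :
  (forall j, exists N : nat, forall k, (N <= k)%N -> P j k) ->
  exists N : nat, forall k, (N <= k)%N -> forall j, P j k.
Proof.
move=> H; have [f hf] := choice H.
exists (\max_j f j) => k hk j; apply: hf; apply: leq_trans hk.
exact: leq_bigmax.
Qed.

Lemma findel (R : realType) (I : finType) (P : I -> R -> Prop) :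
  (forall j, exists2 d, 0 < d & forall d', 0 < d' -> d' <= d -> P j d') ->
  exists2 d, 0 < d & forall j, P j d.
Proof.
move=> H.
have H' : forall j, exists d, 0 < d /\ forall d', 0 < d' -> d' <= d -> P j d'.
  by move=> j; have [d d0 Hd] := H j; exists d.
have [f hf] := choice H'.
have p : 0 < \big[Num.min/1]_j f j.
  by apply: lt_bigmin => // j _; case: (hf j).
exists (\big[Num.min/1]_j f j) => // j.
by case: (hf j) => _; apply => //; apply: bigmin_le.
Qed.

Lemma norm_close (R : realType) (x y e : R) : `|x - y| < e -> `|x| <= `|y| + e.
Proof.
move=> h; have -> : x = y + (x - y) by rewrite addrC subrK.
by apply: le_trans (ler_normD _ _) _; rewrite lerD2l ltW.
Qed.

Arguments finN {I P}.
Arguments findel {R I P}.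
Local Notation M := (2 * pi).

Lemma far_step {R : realType} {K : R -> \bar R} (hK : concave_kernel K)
  {s0 h dl Dall hmax eta : R} :
  dl <= s0 -> s0 <= M - dl -> 0 < dl -> dl <= M / 4 -> 0 <= h -> h < hmax ->
  hmax <= dl / 2 ->
  `|Ub K| + `|fine (K (M - dl / 4))| <= Dall ->
  hmax * (2 * (Dall + 1)) <= eta * dl -> 0 < eta ->
  (K s0 <= K (s0 + h)%R + eta%:E)%E.
Proof.
move=> hn1 hn2 dl0 dl2 h0 hh hm1 DDj hm2 eta0.
have M0 := @M_gt0 R.
set q := M - dl / 4.
have hs : 0 < s0 < M by apply/andP; split; lra.
have hs' : 0 < s0 + h < M by apply/andP; split; lra.
rewrite (kfin hK hs) (kfin hK hs') -EFinD lee_fin.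
have := kshift hK s0 (s0 + h) q (`|Ub K| + `|fine (K q)|) eta.
have ub1 : fine (K s0) <= Ub K.
  by have := kub hK s0; rewrite (kfin hK hs) lee_fin.
have ub2 := ler_norm (Ub K).
have ub3 : - fine (K q) <= `|fine (K q)|.
  by have := ler_norm (- fine (K q)); rewrite normrN.
have D0 : 0 <= `|Ub K| + `|fine (K q)| by apply: addr_ge0.
have p1 : h * (`|Ub K| + `|fine (K q)|) <= hmax * (Dall + 1).
  apply: ler_pM => //; lra.
have p2 : eta * (dl / 2) <= eta * (q - s0) by rewrite ler_pM2l //; rewrite /q; lra.
have -> : s0 + h - s0 = h by ring.
move=> H; have {}H := H ltac:(lra) ltac:(lra) ltac:(rewrite /q; lra) ltac:(rewrite /q; lra)
  ltac:(lra) D0 ltac:(lra).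
lra.
Qed.

Theorem theorem4p7 (R : realType) (n : nat)
  (K : 'I_n.+1 -> R -> \bar R) (Kk : nat -> 'I_n.+1 -> R -> \bar R) :
  (forall j, concave_kernel (K j)) ->
  (forall k j, concave_kernel (Kk k j)) ->
  (* maximum points avoid all the x_j, j = 0..n (with x_0 = 0) *)
  (forall (x : 'I_n -> R) (z : R), in_torus_n x -> 0 <= z < 2 * pi ->
     Fsum K x z = mbar K x -> z != 0 /\ forall j, z != x j) ->
  (* K_j^(k) -> K_j locally uniformly on (0, 2pi) *)
  (forall j (a b : R), 0 < a -> b < 2 * pi -> forall eps : R, 0 < eps ->
     exists N : nat, forall k, (N <= k)%N -> forall t, a <= t <= b ->
       `| fine (Kk k j t) - fine (K j t) | < eps) ->
  (* mbar^(k) -> mbar uniformly on T^n *)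
  forall eps : R, 0 < eps ->
    exists N : nat, forall k, (N <= k)%N -> forall x : 'I_n -> R, in_torus_n x ->
      (`| mbar (Kk k) x - mbar K x | < eps%:E)%E.
Proof.
move=> hK hKk _ hconv eps eps0.
have M0 := @M_gt0 R.
set N1 : R := (n.+1)%:R.
have N10 : 0 < N1 by rewrite ltr0n.
set eta := Num.min 1 (eps / (4 * (N1 + 1))).
have eta0 : 0 < eta by rewrite lt_min ltr01 /= divr_gt0 //; lra.
have eta1 : eta <= 1 by rewrite ge_min lexx.
have etae : eta * (4 * (N1 + 1)) <= eps.
  rewrite -ler_pdivlMr; last lra.
  by rewrite ge_min lexx orbT.
have N1eta : 0 < N1 * eta by apply: mulr_gt0.
set S := \sum_j (`|Ub (K j)| + 1).
have SD : forall j, \sum_(i | i != j) (`|Ub (K i)| + 1) <= S.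
  move=> j; rewrite /S [X in _ <= X](bigD1 j) //=; have ? := normr_ge0 (Ub (K j)); lra.
set ml := mlow K.
set B := ml - S - 4.
set c := fun j => if K j (0:R) is r%:E then r + eta else B.
have Kc : forall j, (K j 0%R < (c j)%:E)%E.
  move=> j; rewrite /c; have := hK j; case=> _ [_ [_ [Kninf _]]].
  move: Kninf; case: (K j 0) => [r| |] //= _.
  + by rewrite lte_fin ltrDl.
  + by rewrite ltNye.
have [NC hNC] : exists NC : nat, forall k, (NC <= k)%N -> forall j s,
    (Kk k j s <= (`|Ub (K j)| + 1)%:E)%E.
  apply: finN => j.
  have [N0 HN0] := hconv j (M / 4) (M * 3 / 4) ltac:(lra) ltac:(lra) (1 / 9) ltac:(lra).
  exists N0 => k kN s; apply: le_trans (kub (hKk k j) s) _; rewrite lee_fin.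
  have c1 := HN0 k kN (M / 4) ltac:(apply/andP; split; lra).
  have c2 := HN0 k kN (M / 2) ltac:(apply/andP; split; lra).
  have c3 := HN0 k kN (M * 3 / 4) ltac:(apply/andP; split; lra).
  rewrite /Ub.
  have n1 := @norm_close _ (fine (Kk k j (M / 2)) - fine (Kk k j (M * 3 / 4)))
    (fine (K j (M / 2)) - fine (K j (M * 3 / 4))) (2 / 9).
  have n2 := @norm_close _ (fine (Kk k j (M / 2)) - fine (Kk k j (M / 4)))
    (fine (K j (M / 2)) - fine (K j (M / 4))) (2 / 9).
  have nU := ler_norm (Ub (K j)); rewrite /Ub in nU.
  move: c1 c2 c3; rewrite !ltr_norml => /andP[c1 c1'] /andP[c2 c2'] /andP[c3 c3'].
  have /n1 {}n1 : `|fine (Kk k j (M / 2)) - fine (Kk k j (M * 3 / 4)) -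
      (fine (K j (M / 2)) - fine (K j (M * 3 / 4)))| < 2 / 9.
    by rewrite ltr_norml; apply/andP; split; lra.
  have /n2 {}n2 : `|fine (Kk k j (M / 2)) - fine (Kk k j (M / 4)) -
      (fine (K j (M / 2)) - fine (K j (M / 4)))| < 2 / 9.
    by rewrite ltr_norml; apply/andP; split; lra.
  lra.
have [a a0 Ha] : exists2 a, 0 < a & forall j, exists N : nat, forall k, (N <= k)%N ->
    forall s, 0 <= s < M -> (s < a \/ M - a < s) -> (Kk k j s <= (c j + 2 * eta)%:E)%E.
  apply: findel => j.
  have [a a0 [N HN]] := unear (hK j) (fun k => hKk k j) (hconv j) (c j) eta (Kc j) eta0.
  exists a => // a' a'0 a'a; exists N => k kN s hs hn; apply: HN => //.
  by case: hn => h; [left|right]; lra.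
have [NU hNU] := finN Ha.
have [Ncv hNcv] : exists N : nat, forall k, (N <= k)%N -> forall j t, a <= t <= M - a ->
    `|fine (Kk k j t) - fine (K j t)| < eta.
  apply: finN => j; apply: (hconv j a (M - a) a0 _ eta eta0); lra.
have [d d0 Hd] : exists2 d, 0 < d & forall j s, (0 < s < d \/ M - d < s < M) ->
    fine (K j s) < c j.
  apply: findel => j; have [d d0 Hd] := knear (hK j) (c j) (Kc j).
  exists d => // d' d'0 d'd s hs; apply: Hd.
  by case: hs => /andP[? ?]; [left|right]; apply/andP; split; lra.
set dl := Num.min d (M / 4).
have dl0 : 0 < dl by rewrite lt_min d0 /=; lra.
have dl1 : dl <= d by rewrite ge_min lexx.
have dl2 : dl <= M / 4 by rewrite ge_min lexx orbT.
set q := M - dl / 4.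
set Dall := \sum_j (`|Ub (K j)| + `|fine (K j q)|).
have Dall0 : 0 <= Dall by apply: sumr_ge0 => j _; apply: addr_ge0.
have DD : forall j, `|Ub (K j)| + `|fine (K j q)| <= Dall.
  move=> j; rewrite /Dall [X in _ <= X](bigD1 j) //= lerDl.
  by apply: sumr_ge0 => i _; apply: addr_ge0.
set hmax := Num.min (dl / 2) (eta * dl / (2 * (Dall + 1))).
have hm0 : 0 < hmax.
  rewrite lt_min; apply/andP; split; first lra.
  apply: divr_gt0; first exact: mulr_gt0.
  lra.
have hm1 : hmax <= dl / 2 by rewrite ge_min lexx.
have hm2 : hmax * (2 * (Dall + 1)) <= eta * dl.
  rewrite -ler_pdivlMr; last lra.
  by rewrite ge_min lexx orbT.
set dp := hmax / (2 * (n.+2)%:R).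
have n2 : 0 < (n.+2)%:R :> R by rewrite ltr0n.
have dp0 : 0 < dp by rewrite divr_gt0 // mulr_gt0.
have dpe : 2 * (n.+2)%:R * dp = hmax by rewrite /dp; field; lra.
have dpM : 2 * (n.+2)%:R * dp <= M by rewrite dpe; lra.
have [NL hNL] : exists N : nat, forall k, (N <= k)%N -> forall j t, dp <= t <= M - dp ->
    `|fine (Kk k j t) - fine (K j t)| < eta.
  apply: finN => j; apply: (hconv j dp (M - dp) dp0 _ eta eta0); lra.
exists (maxn NC (maxn NU (maxn Ncv NL))) => k hk x hx.
rewrite !geq_max in hk; case/and4P: hk => kC kU kcv kL.
have lb := mbar_lb hK x hx; have ub := mbar_le hK x.
have : mbar K x \is a fin_num.
  rewrite fin_numElt; apply/andP; split.
  - exact: lt_le_trans (ltNyr ml) lb.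
  - exact: le_lt_trans ub (ltry _).
move/fineK/esym => mfin.
set mr := fine (mbar K x) in mfin.
have mlr : ml <= mr by rewrite -lee_fin -mfin.
have UP : (mbar (Kk k) x <= (mr + 3 * N1 * eta)%:E)%E.
  apply: ge_ereal_sup => _ [t _ <-].
  case/boolP: [exists j, (K j 0%R == -oo%E) &&
      ((red (t - X x j) < a) || (M - a < red (t - X x j)))].
  - case/existsP => j /andP[/eqP Kj0 hnear].
    rewrite FsumE (bigD1 j) //=.
    have t1 : (Kk k j (t - X x j)%R <= (B + 2 * eta)%:E)%E.
      rewrite (kred (hKk k j)).
      have := hNU k kU j (red (t - X x j)) (red_itv _).
      rewrite /c Kj0; apply; by case/orP: hnear; [left|right].
    have t2 : (\sum_(i | i != j) Kk k i (t - X x i)%R <=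
        (\sum_(i | i != j) (`|Ub (K i)| + 1))%:E)%E.
      rewrite -sumEFin; apply: lee_sum => i _; exact: hNC.
    apply: le_trans (leeD t1 t2) _; rewrite -EFinD lee_fin.
    have := SD j; rewrite /B => ?; lra.
  - rewrite negb_exists => /forallP hnot.
    apply: (@le_trans _ _ (Fsum K x t + (3 * N1 * eta)%:E)%E); last first.
      rewrite EFinD -mfin; apply: leeD => //; exact: mbar_ge hK x t.
    rewrite !FsumE.
    have -> : ((3 * N1 * eta)%:E = \sum_(j < n.+1) (3 * eta)%:E)%E.
      rewrite sumEFin sumr_const card_ord -mulr_natr /N1; congr EFin; ring.
    rewrite -big_split /=; apply: lee_sum => j _.
    rewrite (kred (hKk k j)) (kred (hK j)).
    have /andP[r0 rM] := red_itv (t - X x j).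
    set r := red (t - X x j) in r0 rM *.
    case/boolP: ((r < a) || (M - a < r)) => hn.
    + have Kj0 : K j 0%R != -oo%E.
        by have := hnot j; rewrite hn andbT.
      have := hK j; case=> _ [_ [_ [Kninf _]]].
      have H1 := hNU k kU j r (red_itv _).
      have /H1 {}H1 : r < a \/ M - a < r by case/orP: hn; [left|right].
      have H2 := kmin_all (hK j) r.
      move: H1 H2 Kninf Kj0; rewrite /c; case: (K j 0%R) => [L| |] //= H1 H2 _ _.
      apply: le_trans H1 _.
      have -> : L + eta + 2 * eta = L + 3 * eta by ring.
      rewrite EFinD; exact: leeD H2 (lexx _).
    + rewrite negb_or -!leNgt in hn.
      have hr' : 0 < r < M by clear -hn a0 M0; case/andP: hn => ? ?; apply/andP; split; lra.
      rewrite (kfin (hKk k j) hr') (kfin (hK j) hr') -EFinD lee_fin.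
      have := hNcv k kcv j r hn; rewrite ltr_norml => /andP[? ?]; lra.
have LO : ((mr - eta)%:E <= mbar (Kk k) x + (2 * N1 * eta)%:E)%E.
  have : ((mr - eta)%:E < mbar K x)%E by rewrite mfin lte_fin; lra.
  case/ereal_sup_gt => _ [t0 _ <-] Ht0.
  have [i hi] := pigeon (X x) t0 dp dp0 dpM.
  set h := 2 * i%:R * dp in hi *.
  have i0 : 0 <= (i%:R : R) by exact: ler0n.
  have iN : (i%:R : R) <= (n.+1)%:R by rewrite ler_nat -ltnS ltn_ord.
  have nn : (n.+2)%:R = (n.+1)%:R + 1 :> R by rewrite natr1.
  have h0 : 0 <= h by rewrite /h; apply: mulr_ge0; [apply: mulr_ge0|]; rewrite ?ler0n ?ltW.
  have hh : h < hmax by rewrite -dpe /h ltr_pM2r // ltr_pM2l // ltr_nat ltn_ord.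
  have S1 : (Fsum K x t0 <= Fsum K x (t0 + h) + (N1 * eta)%:E)%E.
    rewrite !FsumE.
    have -> : ((N1 * eta)%:E = \sum_(j < n.+1) eta%:E)%E.
      by rewrite sumEFin sumr_const card_ord -mulr_natr /N1 mulrC.
    rewrite -big_split /=; apply: lee_sum => j _.
    have [z hz] := red_eq (t0 - X x j).
    have /andP[s00 s0M] := red_itv (t0 - X x j).
    set s0 := red (t0 - X x j) in hz s00 s0M.
    have -> : (t0 + h - X x j = (s0 + h) + z%:~R * M)%R by lra.
    rewrite (kperz (hK j)) hz (kperz (hK j)).
    case/boolP: ((s0 < dl) || (M - dl < s0)) => hn.
    + have near : s0 != 0 -> 0 < s0 < d \/ M - d < s0 < M.
        move=> sn0.
        have s0p : 0 < s0 by rewrite lt_neqAle eq_sym sn0 s00.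
        by clear -hn s0p s0M dl1 dl0; case/orP: hn => ?; [left|right]; apply/andP; split; lra.
      have H1 : (K j s0 <= (c j)%:E)%E.
        case/boolP: (s0 == 0) => [/eqP->|sn0]; first exact: ltW (Kc j).
        have hs : 0 < s0 < M by apply/andP; split => //; rewrite lt_neqAle eq_sym sn0 s00.
        rewrite (kfin (hK j) hs) lee_fin; apply: ltW; apply: Hd; exact: near.
      have Kj0 : K j 0%R != -oo%E.
        apply/negP => /eqP Kj0; move: Ht0; apply/negP; rewrite -leNgt.
        rewrite FsumE (bigD1 j) //=.
        have t1 : (K j (t0 - X x j)%R <= B%:E)%E.
          by rewrite hz (kperz (hK j)); move: H1; rewrite /c Kj0.
        have t2 : (\sum_(i1 | i1 != j) K i1 (t0 - X x i1)%R <=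
            (\sum_(i1 | i1 != j) (`|Ub (K i1)| + 1))%:E)%E.
          rewrite -sumEFin; apply: lee_sum => i1 _.
          apply: le_trans (kub (hK i1) _) _; rewrite lee_fin.
          have := ler_norm (Ub (K i1)) => ?; lra.
        apply: le_trans (leeD t1 t2) _; rewrite -EFinD lee_fin.
        have := SD j; rewrite /B => ?; lra.
      have H2 := kmin_all (hK j) (s0 + h).
      have := hK j; case=> _ [_ [_ [Kninf _]]].
      move: H1 H2 Kninf Kj0; rewrite /c; case: (K j 0%R) => [L| |] //= H1 H2 _ _.
      apply: le_trans H1 _; rewrite EFinD; exact: leeD H2 (lexx _).
    + rewrite negb_or -!leNgt in hn; case/andP: hn => hn1 hn2.
      exact: (far_step (hK j) hn1 hn2 dl0 dl2 h0 hh hm1 (DD j) hm2 eta0).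
  have S2 : (Fsum K x (t0 + h) <= Fsum (Kk k) x (t0 + h) + (N1 * eta)%:E)%E.
    rewrite !FsumE.
    have -> : ((N1 * eta)%:E = \sum_(j < n.+1) eta%:E)%E.
      by rewrite sumEFin sumr_const card_ord -mulr_natr /N1 mulrC.
    rewrite -big_split /=; apply: lee_sum => j _.
    rewrite (kred (hK j)) (kred (hKk k j)).
    have hr := hi j.
    have hr' : 0 < red (t0 + h - X x j) < M.
      by clear -hr dp0 M0; case/andP: hr => ? ?; apply/andP; split; lra.
    rewrite (kfin (hK j) hr') (kfin (hKk k j) hr') -EFinD lee_fin.
    have := hNL k kL j _ hr; rewrite ltr_norml => /andP[? ?]; lra.
  have S3 := mbar_ge (fun j => hKk k j) x (t0 + h).
  apply: le_trans (ltW Ht0) _; apply: le_trans S1 _.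
  apply: le_trans (leeD S2 (lexx _)) _; rewrite -addeA -EFinD.
  apply: leeD S3 _; rewrite lee_fin; lra.
rewrite mfin; move: UP LO; case: (mbar (Kk k) x) => [y| |] //=.
- rewrite -EFinD !lee_fin => h1 h2; rewrite lte_fin ltr_norml.
  apply/andP; split; lra.
Qed.
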